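(* Let $R$ be a local ring, $s\in R$ a central element, and let $E$ be an idempotent of $M_2(R;s)$ with $E\neq 0$ and $E\neq I_2$. Then: (1) if $s\in U(R)$, then $E$ is similar to $\left[\begin{smallmatrix} 1&0\\ 0&0\end{smallmatrix}\right]$; (2) if $s\in J(R)$, then $E$ is similar to $\left[\begin{smallmatrix} 1&0\\ 0&0\end{smallmatrix}\right]$ or $E$ is similar to $\left[\begin{smallmatrix} 0&0\\ 0&1\end{smallmatrix}\right]$.
   Context: All rings are associative with identity. A ring $R$ is local if $R/J(R)$ is a division ring, where $J(R)$ is the Jacobson radical; $U(R)$ is the group of units. For a ring $R$ and a central element $s\in R$, $M_2(R;s)$ denotes the ring whose elements are the $2\times 2$ arrays $\left[\begin{smallmatrix} a&b\\ c&d\end{smallmatrix}\right]$ with $a,b,c,d\in R$, with componentwise addition and multiplication $\left[\begin{smallmatrix} a&b\\ c&d\end{smallmatrix}\right]\left[\begin{smallmatrix} a'&b'\\ c'&d'\end{smallmatrix}\right]=\left[\begin{smallmatrix} aa'+s^2bc'&ab'+bd'\\ ca'+dc'&s^2cb'+dd'\end{smallmatrix}\right]$, with identity $I_2$. Two elements $A,B\in M_2(R;s)$ are similar if $B=P^{-1}AP$ for some unit $P$ of $M_2(R;s)$. *)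

(* Defs.v *)
From HB Require Import structures.
From mathcomp Require Import all_boot all_order all_algebra.
Set Implicit Arguments. Unset Strict Implicit. Unset Printing Implicit Defensive.
Import GRing.Theory.
Local Open Scope ring_scope.

Definition in_units (R : unitRingType) (x : R) : Prop := x \is a GRing.unit.

Definition jacobson (R : unitRingType) (x : R) : Prop :=
  forall y : R, (1 - y * x) \is a GRing.unit.

(* R local: R/J(R) is a division ring, i.e. the quotient is nontrivial
   (1 \notin J(R)) and every class x + J(R) with x \notin J(R) has a
   two-sided inverse modulo J(R). *)
Definition local_ring (R : unitRingType) : Prop :=
  ~ jacobson (1 : R) /\
  forall x : R, ~ jacobson x ->
    exists y : R, jacobson (x * y - 1) /\ jacobson (y * x - 1).

Definition central (R : unitRingType) (s : R) : Prop := forall x : R, s * x = x * s.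

Record mat2 (R : Type) := Mat2 { m11 : R; m12 : R; m21 : R; m22 : R }.

Section M2s.
Variables (R : unitRingType) (s : R).

Definition mul2 (A B : mat2 R) : mat2 R :=
  Mat2 (m11 A * m11 B + s ^+ 2 * m12 A * m21 B)
       (m11 A * m12 B + m12 A * m22 B)
       (m21 A * m11 B + m22 A * m21 B)
       (s ^+ 2 * m21 A * m12 B + m22 A * m22 B).

Definition I2 : mat2 R := Mat2 1 0 0 1.
Definition Z2 : mat2 R := Mat2 0 0 0 0.

Definition idempotent2 (E : mat2 R) : Prop := mul2 E E = E.

Definition similar2 (A B : mat2 R) : Prop :=
  exists P Q : mat2 R, mul2 P Q = I2 /\ mul2 Q P = I2 /\ B = mul2 (mul2 Q A) P.
End M2s.

(* Main.v *)
Set Warnings "-notation-overridden,-ambiguous-paths".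
Require Import Defs.
From mathcomp Require Import all_boot all_order all_algebra.
From Stdlib Require Import Classical.
Set Implicit Arguments. Unset Strict Implicit.
Import GRing.Theory.
Local Open Scope ring_scope.

Section Loc.
Variable R : unitRingType.
Hypothesis hL : local_ring R.

Lemma unitJ (x : R) : x \is a GRing.unit \/ jacobson x.
Proof.
case: (classic (jacobson x)) => hJ; [by right|left].
have [y [h1 h2]] := hL.2 x hJ.
have u1 : x * y \is a GRing.unit.
  by move: (h1 (-1)); rewrite mulN1r opprK addrCA subrr addr0.
have u2 : y * x \is a GRing.unit.
  by move: (h2 (-1)); rewrite mulN1r opprK addrCA subrr addr0.
apply/unitrP; exists (y * (x * y)^-1); split; last by rewrite mulrA mulrV.
have eR : x * (y * (x * y)^-1) = 1 by rewrite mulrA mulrV.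
have eL : ((y * x)^-1 * y) * x = 1 by rewrite -mulrA mulVr.
have : (y * x)^-1 * y = y * (x * y)^-1.
  by rewrite -[LHS]mulr1 -eR mulrA eL mul1r.
by move=> <-.
Qed.

Lemma J_notunit (x : R) : jacobson x -> x \is a GRing.unit -> False.
Proof. by move=> hJ hu; move: (hJ x^-1); rewrite mulVr // subrr unitr0. Qed.

Lemma J_1sub (x : R) : jacobson x -> (1 - x) \is a GRing.unit.
Proof. by move=> hJ; move: (hJ 1); rewrite mul1r. Qed.

Lemma J_lmul (r x : R) : jacobson x -> jacobson (r * x).
Proof. by move=> hJ y; rewrite mulrA. Qed.

Lemma J_add (x y : R) : jacobson x -> jacobson y -> jacobson (x + y).
Proof.
move=> hx hy z; have u := hx z.
have -> : 1 - z * (x + y) = (1 - z * x) * (1 - (1 - z * x)^-1 * (z * y)).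
  by rewrite mulrBr mulr1 mulVKr // mulrDr opprD addrA.
by rewrite unitrMr // mulrA hy.
Qed.

Lemma rinv_unit (x z : R) : x * z = 1 -> x \is a GRing.unit.
Proof.
move=> hxz; case: (unitJ x) => // hJ; exfalso.
have u := hJ z.
have ee : (z * x) * (z * x) = z * x by rewrite mulrA -(mulrA z x z) hxz mulr1.
have e0 : z * x = 0.
  have h : (1 - z * x) * (z * x) = 0 by rewrite mulrBl mul1r ee subrr.
  by rewrite -(mulKr u (z * x)) h mulr0.
have : (1 : R) = 0.
  have h : x * z = (x * z) * (x * z) by rewrite hxz mulr1.
  by rewrite -hxz h mulrA -(mulrA x z x) e0 mulr0 mul0r.
by apply/eqP; rewrite oner_eq0.
Qed.

Lemma idem01 (x : R) : x * x = x -> x = 0 \/ x = 1.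
Proof.
move=> h; case: (unitJ x) => hx.
  by right; rewrite -(mulKr hx x) h mulVr.
left; have u := J_1sub hx.
have h0 : (1 - x) * x = 0 by rewrite mulrBl mul1r h subrr.
by rewrite -(mulKr u x) h0 mulr0.
Qed.
End Loc.

Section S.
Variables (R : unitRingType) (s : R).
Hypothesis hs : central s.

Lemma sc2 x : x * s ^+ 2 = s ^+ 2 * x.
Proof. by rewrite expr2 mulrA -hs -mulrA -hs mulrA. Qed.

Lemma mul2A A B C : mul2 s (mul2 s A B) C = mul2 s A (mul2 s B C).
Proof.
case: A B C => a1 b1 c1 d1 [a2 b2 c2 d2] [a3 b3 c3 d3]; rewrite /mul2 /=.
by congr Mat2; rewrite !(mulrDl, mulrDr, mulrA, sc2) addrACA.
Qed.

Lemma mul12 A : mul2 s (I2 R) A = A.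
Proof. by case: A => a b c d; rewrite /mul2 /=; congr Mat2; rewrite !(mul1r, mul0r, mulr0, addr0, add0r). Qed.

Lemma mul21 A : mul2 s A (I2 R) = A.
Proof. by case: A => a b c d; rewrite /mul2 /=; congr Mat2; rewrite !(mulr1, mul0r, mulr0, addr0, add0r). Qed.

Lemma sim_trans A B C : similar2 s A B -> similar2 s B C -> similar2 s A C.
Proof.
move=> [P1 [Q1 [h1 [h2 ->]]]] [P2 [Q2 [h3 [h4 ->]]]].
exists (mul2 s P1 P2), (mul2 s Q2 Q1); split; [|split].
- by rewrite mul2A -(mul2A P2) h3 mul12 h1.
- by rewrite mul2A -(mul2A Q1) h2 mul12 h4.
- by rewrite !mul2A.
Qed.
End S.

Section Main.
Variables (R : unitRingType) (s : R).
Hypothesis hL : local_ring R.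
Hypothesis hs : central s.

Ltac simp := rewrite /mul2 /I2 /=; congr Mat2;
  rewrite ?(mul1r, mulr1, mulr0, mul0r, addr0, add0r, subrr, mulNr, mulrN, addNr, addrN, opprK, oppr0).

Lemma conj_idem P Q E : mul2 s P Q = I2 R -> idempotent2 s E ->
  idempotent2 s (mul2 s (mul2 s Q E) P).
Proof.
move=> h hE; rewrite /idempotent2 !(mul2A hs).
by rewrite -(mul2A hs P Q) h mul12 -(mul2A hs E E P) hE.
Qed.

Lemma conj_back P Q E : mul2 s P Q = I2 R ->
  mul2 s P (mul2 s (mul2 s (mul2 s Q E) P) Q) = E.
Proof. by move=> h; rewrite !(mul2A hs) h mul21 -(mul2A hs) h mul12. Qed.

Lemma conj_neqI P Q E : mul2 s P Q = I2 R -> E <> I2 R ->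
  mul2 s (mul2 s Q E) P <> I2 R.
Proof. by move=> h hE e; apply: hE; rewrite -(conj_back E h) e mul12. Qed.

Lemma c0case (b d : R) : idempotent2 s (Mat2 1 b 0 d) -> Mat2 1 b 0 d <> I2 R ->
  similar2 s (Mat2 1 b 0 d) (Mat2 1 0 0 0).
Proof.
case=> _ h12 _ h22 hI.
move: h22; rewrite mulr0 mul0r add0r => h22.
case: (idem01 hL h22) => ed; subst d.
  exists (Mat2 1 (-b) 0 1), (Mat2 1 b 0 1); split; [|split]; simp => //.
move: h12; rewrite mul1r mulr1 => h12.
have b0 : b = 0 by apply: (@addrI _ b); rewrite h12 addr0.
by subst b; exfalso; apply: hI.
Qed.

Lemma d0case (a c : R) : idempotent2 s (Mat2 a 0 c 1) -> Mat2 a 0 c 1 <> I2 R ->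
  similar2 s (Mat2 a 0 c 1) (Mat2 0 0 0 1).
Proof.
case=> h11 _ h21 _ hI.
move: h11; rewrite mulr0 mul0r addr0 => h11.
case: (idem01 hL h11) => ea; subst a.
  exists (Mat2 1 0 (-c) 1), (Mat2 1 0 c 1); split; [|split]; simp => //.
move: h21; rewrite mul1r mulr1 => h21.
have c0 : c = 0 by apply: (@addrI _ c); rewrite h21 addr0.
by subst c; exfalso; apply: hI.
Qed.

Lemma aunit (a b c d : R) : idempotent2 s (Mat2 a b c d) -> Mat2 a b c d <> I2 R ->
  a \is a GRing.unit -> similar2 s (Mat2 a b c d) (Mat2 1 0 0 0).
Proof.
move=> hE hI ua; have [h11 h12 h21 h22] := hE.
set E := Mat2 a b c d.
set P := Mat2 a 0 c 1; set Q := Mat2 a^-1 0 (-(c * a^-1)) 1.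
have hPQ : mul2 s P Q = I2 R by simp; rewrite ?mulrV // ?subrr.
have hQP : mul2 s Q P = I2 R by simp; rewrite ?mulVr // -?mulrA ?mulVr ?mulr1 ?addNr.
have EP : mul2 s E P = E by simp.
have e : mul2 s (mul2 s Q E) P = Mat2 1 (a^-1 * b) 0 (s ^+ 2 * - (c * a^-1) * b + d).
  rewrite (mul2A hs) EP; simp; rewrite ?mulVr // -?mulrA ?mulVr ?mulr1 ?addNr //.
apply: (sim_trans hs (B := Mat2 1 (a^-1 * b) 0 (s ^+ 2 * - (c * a^-1) * b + d))).
  by exists P, Q; split.
apply: c0case; rewrite -e; [exact: conj_idem | exact: conj_neqI].
Qed.

Lemma dunit (a b c d : R) : idempotent2 s (Mat2 a b c d) -> Mat2 a b c d <> I2 R ->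
  d \is a GRing.unit -> similar2 s (Mat2 a b c d) (Mat2 0 0 0 1).
Proof.
move=> hE hI ud; have [h11 h12 h21 h22] := hE.
set E := Mat2 a b c d.
set P := Mat2 1 b 0 d; set Q := Mat2 1 (-(b * d^-1)) 0 d^-1.
have hPQ : mul2 s P Q = I2 R by simp; rewrite ?mulrV // ?addNr.
have hQP : mul2 s Q P = I2 R by simp; rewrite ?mulVr // -?mulrA ?mulVr ?mulr1 ?addrN.
have EP : mul2 s E P = E by simp.
have e : mul2 s (mul2 s Q E) P = Mat2 (a + s ^+ 2 * - (b * d^-1) * c) 0 (d^-1 * c) 1.
  rewrite (mul2A hs) EP; simp; rewrite ?mulVr // -?mulrA ?mulVr ?mulr1 ?addrN //.
apply: (sim_trans hs (B := Mat2 (a + s ^+ 2 * - (b * d^-1) * c) 0 (d^-1 * c) 1)).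
  by exists P, Q; split.
apply: d0case; rewrite -e; [exact: conj_idem | exact: conj_neqI].
Qed.

Lemma adJ (a b c d : R) : idempotent2 s (Mat2 a b c d) ->
  jacobson a -> jacobson d -> Mat2 a b c d = Z2 R.
Proof.
case=> h11 h12 h21 h22 ja jd.
have ua := J_1sub ja; have ud := J_1sub jd.
have hc : c * (1 - a) = d * c by rewrite mulrBr mulr1 -{1}h21 addrC addKr.
have hb : b * (1 - d) = a * b by rewrite mulrBr mulr1 -{1}h12 addrK.
have jc : jacobson c.
  case: (unitJ hL c) => // uc; exfalso.
  have u : d * c \is a GRing.unit by rewrite -hc unitrMr.
  apply: (J_notunit jd); apply: (rinv_unit hL (z := c * (d * c)^-1)).
  by rewrite mulrA mulrV.
have eb : b = a * b * (1 - d)^-1 by rewrite -hb mulrK.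
set k := a + s ^+ 2 * b * (1 - d)^-1 * c.
have jk : jacobson k by apply: J_add => //; exact: J_lmul.
have uk := J_1sub jk.
have ak : a * (1 - k) = 0.
  rewrite mulrBr mulr1 /k mulrDr.
  have -> : a * (s ^+ 2 * b * (1 - d)^-1 * c) = s ^+ 2 * b * c.
    by rewrite (mulrA a) (mulrA a) (mulrA a) (sc2 hs a) -(mulrA (s ^+ 2) a b) -(mulrA (s ^+ 2) (a * b)) -eb.
  by rewrite h11 subrr.
have a0 : a = 0 by rewrite -(mulrK uk a) ak mul0r.
subst a.
have b0 : b = 0 by rewrite eb !mul0r.
subst b.
have c0 : c = 0.
  have h : (1 - d) * c = 0 by rewrite mulrBl mul1r -hc subr0 mulr1 subrr.
  by rewrite -(mulKr ud c) h mulr0.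
subst c.
move: h22; rewrite ?mulr0 ?mul0r add0r => h22.
case: (idem01 hL h22) => ed; first by subst d.
by exfalso; apply: hL.1; rewrite -ed.
Qed.

Lemma sD2D1 : s \is a GRing.unit -> similar2 s (Mat2 0 0 0 1) (Mat2 1 0 0 0).
Proof.
move=> us; have u2 : s ^+ 2 \is a GRing.unit by rewrite unitrX.
exists (Mat2 0 1 1 0), (Mat2 0 (s ^+ 2)^-1 (s ^+ 2)^-1 0); split; [|split];
  simp; rewrite ?mulrV ?mulVr //.
Qed.

Lemma main (E : mat2 R) : idempotent2 s E -> E <> Z2 R -> E <> I2 R ->
  similar2 s E (Mat2 1 0 0 0) \/ similar2 s E (Mat2 0 0 0 1).
Proof.
case: E => a b c d hE h0 hI.
case: (unitJ hL a) => ua; first by left; exact: aunit.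
case: (unitJ hL d) => ud; first by right; exact: dunit.
by exfalso; apply: h0; exact: adJ.
Qed.
End Main.

Theorem lemma2p7 (R : unitRingType) (s : R) (E : mat2 R) :
  local_ring R -> central s ->
  idempotent2 s E -> E <> Z2 R -> E <> I2 R ->
  (in_units s -> similar2 s E (Mat2 1 0 0 0)) /\
  (jacobson s ->
     similar2 s E (Mat2 1 0 0 0) \/ similar2 s E (Mat2 0 0 0 1)).
Proof.
move=> hL hs hE h0 hI; split; last by move=> _; exact: main.
move=> us; case: (main hL hs hE h0 hI) => // h.
apply: (sim_trans hs h); exact: sD2D1.
Qed.
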